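(* Let $f$ be a real entire function of genus $1$ with only negative zeros and with $f(0)>0$. For $s>0$ the function $$h(x)=(\log f)'(x)-(\log f)'(x+s),\qquad x>0,$$ is a generalized Stieltjes function of order $2$.
   Context: A generalized Stieltjes function of order $2$ is a function $F(x)=\int_0^\infty\frac{d\mu(t)}{(x+t)^2}+c$ on $(0,\infty)$ with $\mu$ a positive measure on $[0,\infty)$ making the integral converge and $c\geq0$. *)

(* Defs.v *)
From HB Require Import structures.
From mathcomp Require Import all_boot all_order all_algebra.
From mathcomp Require Import all_classical all_reals all_analysis.
Set Implicit Arguments. Unset Strict Implicit. Unset Printing Implicit Defensive.
Import Order.TTheory GRing.Theory Num.Theory.
Import numFieldNormedType.Exports.
Local Open Scope classical_set_scope.
Local Open Scope ring_scope.

Definition weierstrass_factor (R : realType) (p : nat) (u : R) : R :=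
  (1 - u) * expR (\sum_(1 <= k < p.+1) u ^+ k / k%:R).

Definition summable_pow (R : realType) (w : nat -> R) (p : nat) : Prop :=
  cvgn (series (fun n => w n ^+ p.+1)).

(* [genus_of_canonical w p]: p is the genus of the canonical product built on
   the zeros z_n = -1/w_n, i.e. the least integer p with
   sum_n |z_n|^-(p+1) < oo.  (Indices with w_n = 0 encode "no zero"; this
   allows finitely many zeros as well as infinitely many.) *)
Definition genus_of_canonical (R : realType) (w : nat -> R) (p : nat) : Prop :=
  summable_pow w p /\ forall p', (p' < p)%N -> ~ summable_pow w p'.

(* [f] is (the restriction to the real axis of) a real entire function of
   genus 1 all of whose zeros are negative, with f(0) > 0:
   by the definition of the genus, f = e^Q * prod_n E_p(z / z_n) where the
   z_n = -1/w_n < 0 are the zeros (with multiplicity), p is the genus of the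
   canonical product, Q is a (real) polynomial, and genus = max(p, deg Q) = 1.
   No factor z^m occurs since f(0) <> 0. *)
Definition real_entire_genus1_negzeros (R : realType) (f : R -> R) : Prop :=
  exists (w : nat -> R) (p : nat) (Q : {poly R}),
    [/\ forall n, 0 <= w n,
        genus_of_canonical w p,
        maxn p (size Q).-1 = 1%N,
        0 < f 0 &
        forall x : R,
          (fun N => expR Q.[x] *
             \prod_(n < N) weierstrass_factor p (- (w n * x))) @ \oo --> f x].

Definition gen_stieltjes2 (R : realType) (F : R -> R) : Prop :=
  exists (mu : {measure set R -> \bar R}) (c : R),
    0 <= c /\
    forall x : R, 0 < x ->
      (\int[mu]_(t in `[0%R, +oo[) ((x + t) ^- 2)%:E < +oo)%E /\
      (F x)%:E = (\int[mu]_(t in `[0%R, +oo[) ((x + t) ^- 2)%:E + c%:E)%E.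

(* Main.v *)
Set Warnings "-notation-overridden,-ambiguous-paths,-notation-incompatible-prefix".
Require Import Defs.
From HB Require Import structures.
From mathcomp Require Import all_boot all_order all_algebra.
From mathcomp Require Import all_classical all_reals all_analysis.
From mathcomp Require Import ring lra measurable_realfun.
Import Order.TTheory GRing.Theory Num.Theory.
Import numFieldNormedType.Exports.
Local Open Scope classical_set_scope.
Local Open Scope ring_scope.

Section Aux.
Variable R : realType.

Lemma wf_eq (p : nat) (w x : R) : (p <= 1)%N ->
  weierstrass_factor p (- (w * x)) = (1 + w * x) * expR (- (p%:R * (w * x))).
Proof.
rewrite /weierstrass_factor opprK; case: p => [|[|//]] _.
  by rewrite big_geq // mul0r oppr0.
by rewrite big_nat1 expr1 divr1 mul1r.
Qed.

Lemma ln1D_ge (u : R) : -1 < u -> u / (1 + u) <= ln (1 + u).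
Proof.
move=> u1; have y0 : 0 < 1 + u by rewrite -ltrBlDl sub0r.
have h : -1 < (1 + u)^-1 - 1 by rewrite ltrBrDl subrr invr_gt0.
have := le_ln1Dx h.
have -> : 1 + ((1 + u)^-1 - 1) = (1 + u)^-1 by rewrite addrC subrK.
rewrite lnV ?posrE // => H.
have -> : u / (1 + u) = - ((1 + u)^-1 - 1).
  have nz : 1 + u != 0 by rewrite lt0r_neq0.
  by field.
by rewrite lerNl.
Qed.

Lemma ln1D_rem (u : R) : -(2^-1) <= u -> `|ln (1 + u) - u| <= 2 * u ^+ 2.
Proof.
move=> uh; have u1 : -1 < u by apply: lt_le_trans uh; lra.
have y0 : 0 < 1 + u by lra.
have nz : 1 + u != 0 by rewrite lt0r_neq0.
have A := le_ln1Dx u1.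
have B := @ln1D_ge u u1.
have s0 := sqr_ge0 u.
rewrite ler_norml; apply/andP; split; last by lra.
have : u ^+ 2 / (1 + u) <= 2 * u ^+ 2.
  rewrite ler_pdivrMr //.
  have : u ^+ 2 * 1 <= u ^+ 2 * (2 * (1 + u)) by rewrite ler_wpM2l //; lra.
  by rewrite mulr1 mulrA [_ * 2]mulrC.
move=> C.
have E : u / (1 + u) = u - u ^+ 2 / (1 + u) by field.
rewrite E in B.
lra.
Qed.
Lemma dom_series (a v : nat -> R) (C : R) : 0 <= C -> (forall n, 0 <= v n) ->
  cvgn (series v) -> (forall n, `|a n| <= C * v n) ->
  cvgn (series a) /\ `|limn (series a)| <= C * limn (series v).
Proof.
move=> C0 v0 cv av.
have cCv : cvgn (series (C *: v)) by apply: is_cvg_seriesZ.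
have ca : cvgn (series a).
  apply: normed_cvg; apply: (@series_le_cvg _ _ (C *: v)) => //.
  - by move=> n /=.
  - by move=> n; rewrite /= mulr_ge0.
split => //.
rewrite -[C * _]/(C *: limn (series v)) -lim_seriesZ //.
rewrite ler_norml; apply/andP; split.
  rewrite -limN //; apply: ler_lim => //; first exact: is_cvgN.
  apply: nearW => N; rewrite /series /=.
  have -> : (- (fun n => \sum_(0 <= k < n) (C *: v) k)) N = \sum_(0 <= k < N) - (C *: v) k by rewrite sumrN.
  apply: ler_sum => i _.
  by rewrite /= lerNl; apply: le_trans (av i); rewrite -normrN ler_norm.
apply: ler_lim => //; apply: nearW => N; rewrite /series /=; apply: ler_sum => i _.
by rewrite /=; apply: le_trans (av i); rewrite ler_norm.
Qed.
End Aux.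

Section Main.
Variable R : realType.
Variables (w : nat -> R) (p : nat) (c0 c1 : R) (f : R -> R).
Hypothesis w0 : forall n, 0 <= w n.
Hypothesis p1 : (p <= 1)%N.

Definition psi n (y : R) := ln (1 + w n * y) - p%:R * (w n * y).
Definition tau n (y : R) := w n / (1 + w n * y) - p%:R * w n.
Definition vv n := w n ^+ p.+1.

Lemma psi_bound n y : 0 <= y -> `|psi n y| <= (2 * y ^+ 2 + y) * vv n.
Proof.
move=> y0; have wy : 0 <= w n * y by rewrite mulr_ge0.
rewrite /psi /vv; case: p p1 => [|[|//]] _.
  rewrite mul0r subr0 expr1 ger0_norm; last by rewrite ln_ge0 // lerDl.
  apply: le_trans (le_ln1Dx _) _; first lra.
  have := sqr_ge0 y; have := w0 n; nra.
rewrite mul1r; apply: le_trans (@ln1D_rem _ (w n * y) _) _; first lra.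
have := sqr_ge0 y; have := w0 n; rewrite exprMn; nra.
Qed.

Lemma tau_bound n y : 0 <= y -> `|tau n y| <= (1 + y) * vv n.
Proof.
move=> y0; have wy : 0 <= w n * y by rewrite mulr_ge0.
have wn := w0 n.
have d0 : 0 < 1 + w n * y by lra.
have nz : 1 + w n * y != 0 by rewrite lt0r_neq0.
have A : w n / (1 + w n * y) <= w n.
  by rewrite ler_pdivrMr //; nra.
have B : 0 <= w n / (1 + w n * y) by rewrite divr_ge0 // ltW.
rewrite /tau /vv; case: p p1 => [|[|//]] _.
  by rewrite mul0r subr0 expr1 ger0_norm //; nra.
have -> : w n / (1 + w n * y) - 1%:R * w n = - (w n ^+ 2 * y / (1 + w n * y)).
  by field.
have C : 0 <= w n ^+ 2 * y / (1 + w n * y) by rewrite divr_ge0 ?mulr_ge0 ?sqr_ge0 // ltW.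
have D : w n ^+ 2 * y / (1 + w n * y) <= w n ^+ 2 * y.
  by rewrite ler_pdivrMr //; have := mulr_ge0 (mulr_ge0 (sqr_ge0 (w n)) y0) wy; nra.
rewrite normrN ger0_norm //; have := sqr_ge0 (w n); nra.
Qed.

Lemma rem_bound n (y h : R) : 0 < y -> `|h| <= y / 2 ->
  `|psi n (h + y) - psi n y - h * tau n y| <= 2 * h ^+ 2 * w n ^+ 2.
Proof.
move=> y0 hy; have wn := w0 n.
have wy : 0 <= w n * y by rewrite mulr_ge0 // ltW.
have d0 : 0 < 1 + w n * y by lra.
have nz : 1 + w n * y != 0 by rewrite lt0r_neq0.
set u := h * w n / (1 + w n * y).
have hw : - ((1 + w n * y) / 2) <= h * w n.
  move: hy; rewrite ler_norml => /andP[h1 _]; nra.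
have uh : - (2^-1) <= u.
  rewrite /u ler_pdivlMr //; lra.
have u1 : 0 < 1 + u by lra.
have E : 1 + w n * (h + y) = (1 + w n * y) * (1 + u) by rewrite /u; field.
have -> : psi n (h + y) - psi n y - h * tau n y = ln (1 + u) - u.
  by rewrite /psi /tau E lnM ?posrE // /u; field.
apply: le_trans (@ln1D_rem _ u uh) _.
have : u ^+ 2 <= h ^+ 2 * w n ^+ 2.
  rewrite /u expr_div_n -exprMn ler_pdivrMr ?exprn_gt0 //.
  rewrite -[X in X <= _]mulr1 ler_wpM2l ?sqr_ge0 //.
  have : 1 <= 1 + w n * y by lra.
  move=> H; rewrite -(expr1n _ 2) ler_pXn2r // ?nnegrE; lra.
lra.
Qed.

Hypothesis cv : cvgn (series vv).

Lemma vv0 n : 0 <= vv n. Proof. by rewrite /vv exprn_ge0. Qed.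

Lemma cv_psi y : 0 <= y -> cvgn (series (psi^~ y)).
Proof.
move=> y0; have [] := @dom_series _ (psi^~ y) vv (2 * y ^+ 2 + y) _ vv0 cv (fun n => psi_bound n y y0) => //.
by rewrite addr_ge0 // mulr_ge0 // sqr_ge0.
Qed.

Lemma cv_tau y : 0 <= y -> cvgn (series (tau^~ y)).
Proof.
move=> y0; have [] := @dom_series _ (tau^~ y) vv (1 + y) _ vv0 cv (fun n => tau_bound n y y0) => //.
by rewrite addr_ge0.
Qed.

Lemma K_ex : exists K, 0 <= K /\ forall n, w n ^+ 2 <= K * vv n.
Proof.
have [hp|hp] : p = 0%N \/ p = 1%N by case: p p1 => [|[|]]; auto.
  have vw n : vv n = w n by rewrite /vv hp expr1.
  exists (limn (series vv)); have nd : {homo series vv : n m / (n <= m)%N >-> n <= m}.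
    by apply: nondecreasing_series => n _ _; exact: vv0.
  have le n : w n <= limn (series vv).
    apply: le_trans (nondecreasing_cvgn_le nd cv n.+1).
    rewrite seriesSr vw lerDr /series /= sumr_ge0 // => i _.
    exact: vv0.
  split; first exact: le_trans (w0 0) (le 0%N).
  by move=> n; rewrite vw expr2 ler_wpM2r.
by exists 1; split => // n; rewrite mul1r /vv hp.
Qed.

Definition S y := limn (series (psi^~ y)).
Definition T y := limn (series (tau^~ y)).

Lemma prod_eq y N : 0 <= y ->
  expR (c0 + c1 * y) * \prod_(n < N) weierstrass_factor p (- (w n * y)) =
  expR (c0 + c1 * y + series (psi^~ y) N).
Proof.
move=> y0; elim: N => [|N IH].
  by rewrite big_ord0 mulr1 /series /= big_geq // addr0.
rewrite big_ord_recr /= mulrA IH seriesSr addrA [in RHS]expRD wf_eq //.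
congr (_ * _); rewrite /psi expRD lnK // posrE.
by have := w0 N; have := mulr_ge0 (w0 N) y0; lra.
Qed.

Hypothesis hf : forall x, (fun N => expR (c0 + c1 * x) *
  \prod_(n < N) weierstrass_factor p (- (w n * x))) @ \oo --> f x.

Lemma f_eq y : 0 <= y -> f y = expR (c0 + c1 * y + S y).
Proof.
move=> y0; have := hf y.
rewrite (_ : (fun N => _) = (fun N => expR (c0 + c1 * y + series (psi^~ y) N))); last first.
  by apply/funext => N; rewrite prod_eq.
move=> H1.
have H2 : (fun N => expR (c0 + c1 * y + series (psi^~ y) N)) @ \oo --> expR (c0 + c1 * y + S y).
  have H3 : (fun N => c0 + c1 * y + series (psi^~ y) N) @ \oo --> c0 + c1 * y + S y.
    by apply: cvgD; [exact: cvg_cst | exact: cv_psi].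
  exact: (cvg_comp _ _ H3 (@continuous_expR _ _)).
exact: (cvg_unique _ H1 H2).
Qed.

Lemma lnf_eq y : 0 <= y -> ln (f y) = c0 + c1 * y + S y.
Proof. by move=> y0; rewrite f_eq // expRK. Qed.

Lemma deriv_eq x : 0 < x -> derive1 (fun y => ln (f y)) x = c1 + T x.
Proof.
move=> x0; apply: cvg_lim => //.
have [K [K0 HK]] := K_ex.
set V := limn (series vv).
have V0 : 0 <= V.
  apply: le_trans (nondecreasing_cvgn_le _ cv 0%N).
    by rewrite /series /= big_geq.
  by apply: nondecreasing_series => n _ _; exact: vv0.
set M := 2 * K * V.
have M0 : 0 <= M by rewrite /M !mulr_ge0.
apply/cvgrPdist_le => e e0.
near=> h.
have h0 : h != 0 by near: h; exact: nbhs_dnbhs_neq.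
have hx : `|h| < x / 2 by near: h; apply: dnbhs0_lt; lra.
have he : `|h| < e / (M + 1) by near: h; apply: dnbhs0_lt; rewrite divr_gt0 //; lra.
have hx0 : 0 <= h + x by move: hx; rewrite ltr_norml => /andP[]; lra.
rewrite /= !lnf_eq //; last exact: ltW.
set rho := fun n => psi n (h + x) - psi n x - h * tau n x.
have crho : cvgn (series rho) /\ `|limn (series rho)| <= 2 * h ^+ 2 * K * V.
  apply: dom_series => //.
  - by rewrite mulr_ge0 // mulr_ge0 // sqr_ge0.
  - exact: vv0.
  - move=> n; apply: le_trans (@rem_bound n x h x0 (ltW hx)) _.
    by rewrite -[2 * h ^+ 2 * K * vv n]mulrA ler_wpM2l // mulr_ge0 // sqr_ge0.
have E : limn (series rho) = S (h + x) - S x - h * T x.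
  have -> : series rho = (fun N => series (psi^~ (h + x)) N - series (psi^~ x) N - h * series (tau^~ x) N).
    apply/funext => N; rewrite /series /= /rho.
    by rewrite big_distrr -!sumrB.
  apply: cvg_lim => //.
  apply: cvgB; first apply: cvgB.
  - exact: cv_psi.
  - by apply: cv_psi; exact: ltW.
  - by apply: cvgMr; apply: cv_tau; exact: ltW.
have -> : c1 + T x - h^-1 *: (c0 + c1 * (h + x) + S (h + x) - (c0 + c1 * x + S x)) =
    - (h^-1 * limn (series rho)).
  rewrite E; rewrite -[_ *: _]/(_ * _); by field.
rewrite normrN normrM normrV ?unitfE //.
have hp : 0 < `|h| by rewrite normr_gt0.
have B := crho.2.
have B2 : `|h|^-1 * `|limn (series rho)| <= `|h| * M.
  have hi : 0 <= `|h|^-1 by rewrite invr_ge0 ltW.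
  apply: le_trans (ler_wpM2l hi B) _.
  have -> : h ^+ 2 = `|h| ^+ 2 by rewrite real_normK // num_real.
  have hn : `|h| != 0 by rewrite gt_eqF.
  by rewrite (_ : `|h|^-1 * (2 * `|h| ^+ 2 * K * V) = `|h| * M) // /M; field.
apply: le_trans B2 _.
have : `|h| * (M + 1) <= e by rewrite -ler_pdivlMr //; [exact: ltW | lra].
have := mulr_ge0 (ltW hp) M0; nra.
Unshelve. all: by end_near. Qed.
End Main.

Section FTCpart.
Variable R : realType.

Lemma derF (x t : R) : x + t != 0 ->
  is_derive t 1 (fun y => - (x + y)^-1) ((x + t) ^- 2).
Proof.
move=> nz.
have nz' : shift x t != 0 by rewrite /shift /= addrC.
have H2 := is_deriveV nz' (is_derive_shift t 1 x).
have E : (fun y => - (x + y)^-1) = (- (fun y => (shift x y)^-1))%R.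
  by apply/funext => y; rewrite /shift /= addrC.
have H3 := is_deriveN H2.
rewrite E; refine (is_derive_eq H3 _).
by rewrite /GRing.scale /= mulr1 opprK /shift /= addrC.
Qed.

Lemma ftc_inv2 (x a b : R) : 0 < x -> 0 <= a -> a < b ->
  (\int[lebesgue_measure]_(t in `[a, b]) ((x + t) ^- 2)%:E =
   ((x + a)^-1 - (x + b)^-1)%:E)%E.
Proof.
move=> x0 a0 ab.
have pos t : a <= t -> x + t != 0 by move=> ta; rewrite gt_eqF //; lra.
have cF t : a <= t -> {for t, continuous (fun y : R => - (x + y)^-1)}.
  move=> ta; apply: cvgN; apply: cvgV; first exact: pos.
  by apply: cvgD; [exact: cvg_cst | exact: cvg_id].
rewrite (@continuous_FTC2 _ _ (fun y => - (x + y)^-1)) //.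
- by rewrite -EFinD opprK addrC.
- apply: continuous_in_subspaceT => t; rewrite inE /= in_itv /= => /andP[ta _].
  apply: cvgV; first by rewrite expf_neq0 // pos.
  by rewrite expr2; apply: cvgM; apply: cvgD; [exact: cvg_cst | exact: cvg_id| exact: cvg_cst | exact: cvg_id].
- split.
  + move=> t; rewrite in_itv /= => /andP[ta _].
    by have := @derF x t (pos t (ltW ta)); case.
  + by apply: cvg_at_right_filter; exact: cF.
  + by apply: cvg_at_left_filter; apply: cF; exact: ltW.
- move=> t; rewrite in_itv /= => /andP[ta _].
  by rewrite derive1E; apply: derive_val; exact: (@derF x t (pos t (ltW ta))).
Qed.
End FTCpart.

Section MeasPart.
Variable R : realType.
Variables (w : nat -> R) (s : R).
Hypothesis w0 : forall n, 0 <= w n.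
Hypothesis s0 : 0 < s.

Definition sn : {nonneg R} := NngNum (ltW s0).
Lemma ab n : (w n)^-1 < (w n)^-1 + s. Proof. by rewrite ltrDl. Qed.

Definition mu_ n : {measure set (measurableTypeR R) -> \bar R} :=
  if 0 < w n then (mscale sn (uniform_prob (ab n)) : {measure set _ -> \bar R}) else mzero.

Definition muL : {measure set (measurableTypeR R) -> \bar R} := mseries mu_ 0.

Definition idTR : measurableTypeR R -> R := idfun.
Lemma mid : measurable_fun setT idTR. Proof. exact: (@measurable_id _ _ setT). Qed.
Definition mu : {measure set R -> \bar R} :=
  @measure_function_pushforward__canonical__measure_function_Measure _ _ _ _ _ muL idTR mid.

Lemma meas_f (x : R) : 0 < x ->
  measurable_fun (`[0%R, +oo[ : set R) (fun t : R => ((x + t) ^- 2)%:E).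
Proof.
move=> x0; apply/measurable_EFinP.
apply: measurable_realfun.subspace_continuous_measurable_fun => //.
apply: continuous_in_subspaceT => t; rewrite inE /= in_itv /= andbT => t0.
apply: cvgV; first by rewrite expf_neq0 // gt_eqF //; lra.
by rewrite expr2; apply: cvgM; apply: cvgD; [exact: cvg_cst | exact: cvg_id| exact: cvg_cst | exact: cvg_id].
Qed.

Lemma meas_fL (x : R) : 0 < x ->
  measurable_fun (T := measurableTypeR R) (`[0%R, +oo[ : set _) (fun t : R => ((x + t) ^- 2)%:E).
Proof. move=> x0 mD Y mY; have HH := meas_f x x0 mD; exact (HH Y mY). Qed.

Lemma int_mu (x : R) (g : nat -> R) : 0 < x ->
  (forall n, \int[mu_ n]_(t in `[0%R, +oo[) ((x + t) ^- 2)%:E = (g n)%:E)%E ->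
  (\int[mu]_(t in `[0%R, +oo[) ((x + t) ^- 2)%:E = \sum_(n <oo) (g n)%:E)%E.
Proof.
move=> x0 H.
have f0 t : (0 <= ((x + t) ^- 2)%:E)%E by rewrite lee_fin invr_ge0 sqr_ge0.
rewrite ge0_integral_pushforward //; try exact: (meas_f x x0); try (by move=> t _); try exact: mid.
rewrite (_ : idTR @^-1` _ = `[0%R, +oo[%classic) //.
rewrite ge0_integral_measure_series //.
- by apply: eq_eseriesr => n _; rewrite H.
- by move=> t _; exact: f0.
- exact: (meas_f x x0).
Qed.

Lemma int_mu_n (x : R) n : 0 < x ->
  (\int[mu_ n]_(t in `[0%R, +oo[) ((x + t) ^- 2)%:E =
   (w n / (1 + w n * x) - w n / (1 + w n * (x + s)))%:E)%E.
Proof.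
move=> x0; have f0 t : (0 <= ((x + t) ^- 2)%:E)%E by rewrite lee_fin invr_ge0 sqr_ge0.
rewrite /mu_; case: ifPn => wp; last first.
  have -> : w n = 0 by apply/eqP; rewrite eq_le w0 andbT; rewrite ltNge in wp; move/negbNE: wp.
  by rewrite integral_measure_zero !mul0r subrr.
rewrite ge0_integral_mscale //; try exact: (meas_fL x x0); try by move=> t _.
rewrite integral_mkcond integral_uniform; last 2 first.
- by apply/(measurable_restrictT _ _).1 => //; exact: (meas_fL x x0).
- by move=> t; rewrite patchE; case: ifPn.
set a := (w n)^-1.
have a0 : 0 <= a by rewrite invr_ge0 ltW.
rewrite (_ : (\int[lebesgue_measure]_(t in `[a, (a + s)%R]) _)%E =
   (\int[lebesgue_measure]_(t in `[a, (a + s)%R]) ((x + t) ^- 2)%:E)%E); last first.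
  apply: eq_integral => t; rewrite inE /= in_itv /= => /andP[ta _].
  by rewrite patchE mem_set //= in_itv /= andbT (le_trans a0 ta).
rewrite ftc_inv2 //; last by rewrite ltrDl.
rewrite /= -!EFinM; congr EFin.
have wn : w n != 0 by rewrite gt_eqF.
have wx := mulr_gt0 wp x0.
have wxs : 0 < w n * (x + s) by rewrite mulr_gt0 // addr_gt0.
have d1 : 1 + w n * x != 0 by rewrite gt_eqF //; lra.
have d2 : 1 + w n * (x + s) != 0 by rewrite gt_eqF //; lra.
have d3 : x + a != 0 by rewrite gt_eqF // (lt_le_trans x0) // lerDl.
have d4 : x + (a + s) != 0 by rewrite gt_eqF // (lt_le_trans x0) // lerDl addr_ge0 // ltW.
have s1 : s != 0 by rewrite gt_eqF.
rewrite /a; field.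
by rewrite d1 d2 wn addrAC subrr add0r mulf_neq0.
Qed.
End MeasPart.

Section Final.
Variable R : realType.

Lemma eseries_EFin (g : nat -> R) : cvgn (series g) ->
  (\sum_(n <oo) (g n)%:E)%E = (limn (series g))%:E.
Proof.
move=> cg; rewrite -EFin_lim //.
rewrite (_ : (fun N => _) = (EFin \o series g)) //.
by apply/funext => N; rewrite /series /= sumEFin.
Qed.

Lemma horner_size2 (Q : {poly R}) (x : R) : (size Q <= 2)%N -> Q.[x] = Q`_0 + Q`_1 * x.
Proof.
move=> sQ; rewrite (horner_coef_wide _ sQ) big_ord_recr big_ord_recr big_ord0 /=.
by rewrite add0r expr0 mulr1 expr1.
Qed.
End Final.


Theorem corollary4p10 (R : realType) (f : R -> R) :
  real_entire_genus1_negzeros f ->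
  forall s : R, 0 < s ->
    gen_stieltjes2
      (fun x => derive1 (fun y => ln (f y)) x - derive1 (fun y => ln (f y)) (x + s)).
Proof.
move=> [w [p [Q [w0 [cv _] hmax f0 hf]]]] s s0.
have p1 : (p <= 1)%N by rewrite -hmax leq_maxl.
have sQ : (size Q <= 2)%N.
  have : ((size Q).-1 <= 1)%N by rewrite -hmax leq_maxr.
  by case: (size Q) => [|[|[|]]].
set c0 := Q`_0; set c1 := Q`_1.
have hf' : forall x, (fun N => expR (c0 + c1 * x) *
    \prod_(n < N) weierstrass_factor p (- (w n * x))) @ \oo --> f x.
  by move=> x; rewrite /c0 /c1 -horner_size2.
exists (@mu R w s s0), 0; split => // x x0.
have xs0 : 0 < x + s by rewrite addr_gt0.
have Dx := @deriv_eq R w p c0 c1 f w0 p1 cv hf' x x0.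
have Dxs := @deriv_eq R w p c0 c1 f w0 p1 cv hf' (x + s) xs0.
set g := fun n => w n / (1 + w n * x) - w n / (1 + w n * (x + s)).
have eg : g = ((tau R w p)^~ x - (tau R w p)^~ (x + s))%R.
  apply/funext => n; change (g n = tau R w p n x - tau R w p n (x + s)); rewrite /g /tau; ring.
have c1t := @cv_tau R w p w0 p1 cv x (ltW x0).
have c2t := @cv_tau R w p w0 p1 cv (x + s) (ltW xs0).
have cg : cvgn (series g) by rewrite eg; apply: is_cvg_seriesB.
have I := @int_mu R w s s0 x g x0 (fun n => @int_mu_n R w s w0 s0 x n x0).
rewrite I eseries_EFin //.
split; first exact: ltry.
rewrite adde0 Dx Dxs; congr EFin.
rewrite eg lim_seriesB // /T; ring.
Qed.
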